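(* Let $A_1,\ldots,A_n$ be events in a probability space, let $X$ be the number of these events that occur, and for $1\le j\le n$ let $S_j=\sum_{1\le i_1<\cdots<i_j\le n}P(A_{i_1}\cdots A_{i_j})$. Let $r,k$ be integers with $1\le r\le k<n$. If $r+k$ is odd, then $$P(X\ge r)\ge\sum_{j=r}^{k}(-1)^{r+j}\binom{j-1}{r-1}S_j+\sum_{i=1}^{r}\binom{k-i}{r-i}\frac{\binom{k+1}{i}}{\binom{n}{i}}S_{k+1},$$ and if $r+k$ is even, then $$P(X\ge r)\le\sum_{j=r}^{k}(-1)^{r+j}\binom{j-1}{r-1}S_j-\sum_{i=1}^{r}\binom{k-i}{r-i}\frac{\binom{k+1}{i}}{\binom{n}{i}}S_{k+1}.$$
   Context: Binomial convention: for integers $s,t$, $\binom{t}{s}=0$ if $\min(s,t)<0$ or $s>t$; otherwise $\binom{t}{s}=\frac{t!}{s!(t-s)!}$. $A_{i_1}\cdots A_{i_j}$ denotes the intersection of the events. *)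

(* Defs.v *)
From HB Require Import structures.
From mathcomp Require Import all_boot all_order all_algebra.
From mathcomp Require Import all_classical all_reals all_analysis.
Set Implicit Arguments. Unset Strict Implicit. Unset Printing Implicit Defensive.
Import Order.TTheory GRing.Theory Num.Theory.
Local Open Scope classical_set_scope.
Local Open Scope ring_scope.

Definition inter_ev {T : Type} {n : nat} (A : 'I_n -> set T) (I : {set 'I_n}) : set T :=
  [set x | forall i : 'I_n, i \in I -> A i x].

Definition num_occ {T : Type} {n : nat} (A : 'I_n -> set T) (x : T) : nat :=
  #|[set i : 'I_n | `[< A i x >]]|.

Definition Sj {d : measure_display} {T : measurableType d} {R : realType}
  (P : probability T R) {n : nat} (A : 'I_n -> set T) (j : nat) : R :=
  \sum_(I : {set 'I_n} | #|I| == j) fine (P (inter_ev A I)).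

Definition bonf_main {d : measure_display} {T : measurableType d} {R : realType}
  (P : probability T R) {n : nat} (A : 'I_n -> set T) (r k : nat) : R :=
  \sum_(r <= j < k.+1) (-1) ^+ (r + j) * ('C(j.-1, r.-1))%:R * Sj P A j.

Definition bonf_corr {d : measure_display} {T : measurableType d} {R : realType}
  (P : probability T R) {n : nat} (A : 'I_n -> set T) (r k : nat) : R :=
  \sum_(1 <= i < r.+1)
     ('C(k - i, r - i))%:R * (('C(k.+1, i))%:R / ('C(n, i))%:R) * Sj P A k.+1.

(* Main.v *)
Require Import Defs.
From HB Require Import structures.
From mathcomp Require Import all_boot all_order all_algebra.
From mathcomp Require Import all_classical all_reals all_analysis.
From mathcomp Require Import zify ring lra.
Import Order.TTheory GRing.Theory Num.Theory.
Set Implicit Arguments. Unset Strict Implicit. Unset Printing Implicit Defensive.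

Set Implicit Arguments. Unset Strict Implicit. Unset Printing Implicit Defensive.

Lemma claimB (r k L m : nat) : r.+1 <= k -> r.+1 < L ->
  \sum_(1 <= i < r.+2) ('C(k.+1 - i, r.+1 - i) * 'C(m - i, L.+1 - i)
                        + 'C(k - i, r.+1 - i) * 'C(m - i, L - i))
  = 'C(k, r) * 'C(m, L).
Proof.
elim: r k L m => [|r IH] k L m hk hL.
  rewrite big_nat1 !subnn !bin0 !mul1n subSS subn0.
  case: m => [|m]; first by rewrite !bin0n; case: L hL => // [[]].
  case: L hL => // L hL; rewrite !subSS !subn0 binS; lia.
rewrite big_ltn // (@big_addn _ _ _ 1 _ 1).
case: k hk => // k hk; case: L hL => // L hL.
have -> : \sum_(1 <= i < r.+3 - 1)
    ('C(k.+2 - (i + 1), r.+2 - (i + 1)) * 'C(m - (i + 1), L.+2 - (i + 1)) +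
     'C(k.+1 - (i + 1), r.+2 - (i + 1)) * 'C(m - (i + 1), L.+1 - (i + 1)))
  = \sum_(1 <= i < r.+2)
    ('C(k.+1 - i, r.+1 - i) * 'C(m.-1 - i, L.+1 - i) +
     'C(k - i, r.+1 - i) * 'C(m.-1 - i, L - i)).
  rewrite subn1 /=; apply: eq_big_nat => i _.
  by rewrite !addn1 !subSS -subn1 -subnDA add1n.
rewrite IH //; try lia.
rewrite !subSS !subn1 /=.
case: m => [|m] /=.
  by rewrite !bin0n; case: L hL => // L hL /=; rewrite !muln0.
rewrite (binS m L) (binS k r) !mulnDl !mulnDr !subn0; lia.
Qed.

Definition Gf (r k m : nat) : nat :=
  \sum_(1 <= i < r.+1) 'C(k - i, r - i) * 'C(m - i, k.+1 - i).

Lemma Gstep (r k m : nat) : 1 <= r -> r <= k ->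
  Gf r k.+1 m + Gf r k m = 'C(k, r.-1) * 'C(m, k.+1).
Proof.
case: r => // r _ hk.
rewrite /Gf -big_split /= -(claimB m hk) //.
Qed.

Lemma Gbase (r m : nat) : 'C(m, r.+1) = (r < m) + Gf r.+1 r.+1 m.
Proof.
have -> : Gf r.+1 r.+1 m = \sum_(1 <= i < r.+2) 'C(m - i, r.+2 - i).
  by apply: eq_big_nat => i _; rewrite binn mul1n.
elim: r m => [|r IH] m.
  rewrite big_nat1; case: m => [|m] //=; rewrite ?subSS ?subn0 ?bin1.
lia.
rewrite big_ltn // (@big_addn _ _ _ 1 _ 1) subn1 /=.
have -> : \sum_(1 <= i < r.+2) 'C(m - (i + 1), r.+3 - (i + 1))
   = \sum_(1 <= i < r.+2) 'C(m.-1 - i, r.+2 - i).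
  by apply: eq_big_nat => i _; rewrite addn1 subSS -subn1 -subnDA add1n.
case: m => [|m] /=.
  rewrite bin0n /= big1_seq //= => i; rewrite mem_index_iota => /andP[_ hi].
  rewrite bin0n; apply/eqP; lia.
move: (IH m); rewrite subn1 /= binS => ->; lia.
Qed.

Lemma bin_mul3 (m a b : nat) : b <= a ->
  'C(m, a) * 'C(a, b) = 'C(m, b) * 'C(m - b, a - b).
Proof.
move=> hba.
case: (leqP a m) => ham; last first.
  rewrite (bin_small ham) mul0n; case: (leqP b m) => hbm; first last. by rewrite (bin_small hbm).
  rewrite (@bin_small (m - b)) ?muln0 //; lia.
have hp : 0 < b`! * (a - b)`! * (m - a)`! by rewrite !muln_gt0 !fact_gt0.
apply/eqP; rewrite -(eqn_pmul2r hp).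
have h1 := bin_fact hba.
have h2 := bin_fact ham.
have hb : b <= m by lia.
have h3 := bin_fact hb.
have hab : a - b <= m - b by lia.
have h4 := bin_fact hab.
have e : m - b - (a - b) = m - a by lia.
rewrite e in h4.
rewrite (_ : 'C(m, a) * 'C(a, b) * (b`! * (a - b)`! * (m - a)`!)
   = 'C(m, a) * (('C(a,b) * (b`! * (a - b)`!)) * (m - a)`!)); last first.
  by rewrite !mulnA; congr (_ * _); rewrite -!mulnA; congr (_ * _); rewrite !mulnA.
rewrite h1 h2.
rewrite (_ : 'C(m, b) * 'C(m - b, a - b) * (b`! * (a - b)`! * (m - a)`!)
   = ('C(m, b) * b`!) * ('C(m - b, a - b) * ((a - b)`! * (m - a)`!))); last first.
  rewrite !mulnA; congr (_ * _); rewrite -!mulnA; congr (_ * _); rewrite !mulnA.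
  by rewrite [_ * b`!]mulnC.
by rewrite h4 -mulnA h3.
Qed.

Local Open Scope ring_scope.

Definition Dr (R : realType) (r k m : nat) : R :=
  \sum_(r <= j < k.+1) (-1) ^+ (r + j) * ('C(j.-1, r.-1))%:R * ('C(m, j))%:R.

Lemma Dident (R : realType) (r k m : nat) : (1 <= r)%N -> (r <= k)%N ->
  (r <= m)%:R - Dr R r k m = (-1) ^+ (r + k.+1) * (Gf r k m)%:R.
Proof.
move=> hr hk; have [t ->] : exists t, k = (r + t)%N by exists (k - r)%N; lia.
clear hk.
elim: t => [|t IH].
  rewrite addn0 /Dr big_nat1 -signr_odd addnn odd_double expr0 mul1r.
  rewrite -signr_odd addnS /= addnn odd_double /= expr1 binn.
  case: r hr => // r _; rewrite Gbase natrD /=; ring.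
rewrite /Dr big_nat_recr /=; last by lia.
rewrite !addnS -/(Dr R r (r + t) m) /=.
have := Gstep m hr (_ : (r <= r + t)%N); rewrite leq_addr => /(_ isT) hG.
have hG' : (Gf r (r + t).+1 m)%:R = ('C(r + t, r.-1) * 'C(m, (r + t).+1))%:R - (Gf r (r + t) m)%:R :> R.
  by rewrite -hG natrD addrK.
rewrite addnS in IH.
have hI : (r <= m)%:R = Dr R r (r + t) m + (-1) ^+ (r + (r + t)).+1 * (Gf r (r + t) m)%:R.
  by rewrite -IH addrC subrK.
rewrite hI hG' natrM !exprS; ring.
Qed.

Definition cstB (R : realType) (n r k : nat) : R :=
  \sum_(1 <= i < r.+1) ('C(k - i, r - i))%:R * (('C(k.+1, i))%:R / ('C(n, i))%:R).

Lemma cbound (R : realType) (n r k m : nat) : (k < n)%N -> (r <= k)%N -> (m <= n)%N ->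
  cstB R n r k * ('C(m, k.+1))%:R <= (Gf r k m)%:R.
Proof.
move=> hkn hrk hmn.
rewrite /cstB /Gf natr_sum mulr_suml; apply: ler_sum_nat => i /andP[hi1 hi2].
rewrite natrM -mulrA; apply: ler_wpM2l; first exact: ler0n.
have hn : (0 : R) < ('C(n, i))%:R by rewrite ltr0n bin_gt0; lia.
rewrite mulrAC ler_pdivrMr // -!natrM ler_nat.
rewrite mulnC bin_mul3; last by lia.
by rewrite [X in (X <= _)%N]mulnC leq_mul2l leq_bin2l ?orbT.
Qed.

Lemma pw_odd (R : realType) (n r k m : nat) : (1 <= r)%N -> (r <= k)%N -> (k < n)%N -> (m <= n)%N ->
  odd (r + k) -> Dr R r k m + cstB R n r k * ('C(m, k.+1))%:R <= (r <= m)%:R.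
Proof.
move=> hr hrk hkn hmn ho.
have := Dident R m hr hrk; rewrite -signr_odd addnS /= ho /= expr0 mul1r => h.
have e : (r <= m)%:R = Dr R r k m + (Gf r k m)%:R :> R by rewrite -h addrC subrK.
rewrite e lerD2l.
exact: cbound.
Qed.

Lemma pw_even (R : realType) (n r k m : nat) : (1 <= r)%N -> (r <= k)%N -> (k < n)%N -> (m <= n)%N ->
  ~~ odd (r + k) -> (r <= m)%:R <= Dr R r k m - cstB R n r k * ('C(m, k.+1))%:R.
Proof.
move=> hr hrk hkn hmn ho.
have := Dident R m hr hrk; rewrite -signr_odd addnS /= (negbTE ho) /= expr1 mulN1r => h.
have e : (r <= m)%:R = Dr R r k m - (Gf r k m)%:R :> R by rewrite -h addrC subrK.
rewrite e lerD2l lerN2.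
exact: cbound.
Qed.

Local Open Scope classical_set_scope.
Local Open Scope ring_scope.

Definition occ {T : Type} {n : nat} (A : 'I_n -> set T) (x : T) : {set 'I_n} :=
  [set i : 'I_n | `[< A i x >]].

Lemma occ_meas (d : measure_display) (T : measurableType d) (n : nat) (A : 'I_n -> set T)
  (mA : forall i, measurable (A i)) (J : {set 'I_n}) : measurable [set x | occ A x = J].
Proof.
have key : forall s : seq 'I_n, measurable [set x | forall i, i \in s -> (A i x <-> i \in J)].
  elim => [|i s IH].
    have -> : [set x | forall i, i \in [::] -> (A i x <-> i \in J)] = setT.
      by apply/seteqP; split => x //= _ i; rewrite in_nil.
    exact: measurableT.
  have -> : [set x | forall j, j \in i :: s -> (A j x <-> j \in J)] =
      (if i \in J then A i else ~` A i) `&` [set x | forall j, j \in s -> (A j x <-> j \in J)].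
    apply/seteqP; split => x /=.
      move=> H; split; last by move=> j js; apply: H; rewrite in_cons js orbT.
      have := H i (mem_head _ _); case: (i \in J) => -[h1 h2]; first exact: h2.
      by move=> /h1.
    move=> [h1 h2] j; rewrite in_cons => /orP[/eqP -> | js]; last exact: h2.
    move: h1; case: (i \in J) => h1; split => //; by move=> /h1.
  apply: measurableI => //; case: (i \in J); [exact: mA | exact: measurableC].
have -> : [set x | occ A x = J] = [set x | forall i, i \in index_enum 'I_n -> (A i x <-> i \in J)].
  apply/seteqP; split => x /=.
    move=> <- i _; rewrite /occ inE; split; [by move=> h; apply/asboolP | by move/asboolP].
  move=> H; apply/setP => i; rewrite /occ inE.
  have [h1 h2] := H i (mem_index_enum i).
  by apply/idP/idP => [/asboolP/h1 // | /h2 /asboolP].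
exact: key.
Qed.

Lemma pred_meas (d : measure_display) (T : measurableType d) (n : nat) (A : 'I_n -> set T)
  (mA : forall i, measurable (A i)) (Pr : pred {set 'I_n}) (s : seq {set 'I_n}) :
  measurable [set x | (occ A x \in s) && Pr (occ A x)].
Proof.
elim: s => [|J s IH].
  have -> : [set x | (occ A x \in [::]) && Pr (occ A x)] = set0.
    by apply/seteqP; split => x //=; rewrite in_nil.
  exact: measurable0.
have -> : [set x | (occ A x \in J :: s) && Pr (occ A x)] =
   (if Pr J then [set x | occ A x = J] else set0) `|` [set x | (occ A x \in s) && Pr (occ A x)].
  apply/seteqP; split => x /=.
    rewrite in_cons => /andP[/orP[/eqP e | xs] hP].
      by left; rewrite -e hP.
    by right; rewrite xs hP.
  case=> [|/andP[xs hP]]; last by rewrite in_cons xs orbT hP.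
  by case hJ: (Pr J) => //= e; rewrite e mem_head hJ.
apply: measurableU => //; case: (Pr J) => //; exact: occ_meas.
Qed.

Lemma pred_sum (d : measure_display) (T : measurableType d) (R : realType)
  (P : probability T R) (n : nat) (A : 'I_n -> set T)
  (mA : forall i, measurable (A i)) (Pr : pred {set 'I_n}) (s : seq {set 'I_n}) :
  uniq s ->
  P [set x | (occ A x \in s) && Pr (occ A x)] = (\sum_(J <- s | Pr J) P [set x | occ A x = J])%E.
Proof.
elim: s => [|J s IH].
  move=> _; rewrite big_nil.
  have -> : [set x | (occ A x \in [::]) && Pr (occ A x)] = set0.
    by apply/seteqP; split => x //=; rewrite in_nil.
  exact: measure0.
move=> /= /andP[Js us]; rewrite big_cons -IH //.
case hJ: (Pr J).
  have -> : [set x | (occ A x \in J :: s) && Pr (occ A x)] =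
     [set x | occ A x = J] `|` [set x | (occ A x \in s) && Pr (occ A x)].
    apply/seteqP; split => x /=.
      rewrite in_cons => /andP[/orP[/eqP e | xs] hP]; first by left.
      by right; rewrite xs hP.
    case=> [e|/andP[xs hP]]; last by rewrite in_cons xs orbT hP.
    by rewrite e mem_head hJ.
  rewrite measureU //; first exact: occ_meas.
    exact: pred_meas.
  apply/seteqP; split => x //= [e /andP[xs _]].
  by move: Js; rewrite -e xs.
congr (P _); apply/seteqP; split => x /=.
  rewrite in_cons => /andP[/orP[/eqP e | xs] hP]; first by move: hP; rewrite e hJ.
  by rewrite xs hP.
by move=> /andP[xs hP]; rewrite in_cons xs orbT hP.
Qed.

Lemma pred_fine (d : measure_display) (T : measurableType d) (R : realType)
  (P : probability T R) (n : nat) (A : 'I_n -> set T)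
  (mA : forall i, measurable (A i)) (Pr : pred {set 'I_n}) :
  fine (P [set x | Pr (occ A x)]) = \sum_(J | Pr J) fine (P [set x | occ A x = J]).
Proof.
have -> : [set x | Pr (occ A x)] = [set x | (occ A x \in index_enum {set 'I_n}) && Pr (occ A x)].
  by apply/seteqP; split => x /=; rewrite mem_index_enum.
rewrite pred_sum //; last exact: index_enum_uniq.
rewrite sum_fine // => J _.
apply: fin_num_measure; exact: occ_meas.
Qed.

Definition pJ (d : measure_display) (T : measurableType d) (R : realType)
  (P : probability T R) (n : nat) (A : 'I_n -> set T) (J : {set 'I_n}) : R :=
  fine (P [set x | occ A x = J]).

Lemma pJ_ge0 (d : measure_display) (T : measurableType d) (R : realType)
  (P : probability T R) (n : nat) (A : 'I_n -> set T) J : 0 <= pJ P A J.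
Proof. exact/fine_ge0/measure_ge0. Qed.

Lemma SjE (d : measure_display) (T : measurableType d) (R : realType)
  (P : probability T R) (n : nat) (A : 'I_n -> set T)
  (mA : forall i, measurable (A i)) (j : nat) :
  Sj P A j = \sum_J pJ P A J * ('C(#|J|, j))%:R.
Proof.
rewrite /Sj.
have e : forall I : {set 'I_n}, inter_ev A I = [set x | I \subset occ A x].
  move=> I; apply/seteqP; split => x /=.
    move=> H; apply/fintype.subsetP => i /H h; rewrite /occ inE; exact/asboolP.
  by move=> /fintype.subsetP H i /H; rewrite /occ inE => /asboolP.
under eq_bigr => I _ do rewrite e (pred_fine P mA (fun J => I \subset J)).
rewrite (exchange_big_dep xpredT) //=.
apply: eq_bigr => J _.
rewrite (eq_bigl (fun I => I \in [set K : {set 'I_n} | (K \subset J) && (#|K| == j)]%SET)); last first.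
  by move=> I; rewrite inE andbC.
by rewrite sumr_const cards_draws mulr_natr.
Qed.

Lemma XE (d : measure_display) (T : measurableType d) (R : realType)
  (P : probability T R) (n : nat) (A : 'I_n -> set T)
  (mA : forall i, measurable (A i)) (r : nat) :
  fine (P [set x | (r <= num_occ A x)%N]) = \sum_J pJ P A J * (r <= #|J|)%:R.
Proof.
have -> : [set x | (r <= num_occ A x)%N] = [set x | (r <= #|occ A x|)%N].
  apply/seteqP; split => x /=; rewrite (_ : num_occ A x = #|occ A x|) //;
  apply: eq_card => i; rewrite /occ [in RHS]inE;
  apply/idP/idP => h; first [by rewrite in_setE in h | by rewrite in_setE].
etransitivity; first exact: (pred_fine P mA (fun J => r <= #|J|)%N).
rewrite big_mkcond /=.
by apply: eq_bigr => J _; case: ifP => _; rewrite ?mulr1 ?mulr0.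
Qed.

Theorem theorem3 (d : measure_display) (T : measurableType d) (R : realType)
  (P : probability T R) (n : nat) (A : 'I_n -> set T)
  (mA : forall i, measurable (A i)) (r k : nat) :
  (1 <= r)%N -> (r <= k)%N -> (k < n)%N ->
  (odd (r + k) ->
     bonf_main P A r k + bonf_corr P A r k
       <= fine (P [set x | (r <= num_occ A x)%N])) /\
  (~~ odd (r + k) ->
     fine (P [set x | (r <= num_occ A x)%N])
       <= bonf_main P A r k - bonf_corr P A r k).
Proof.
move=> hr hrk hkn.
have hM : bonf_main P A r k = \sum_J pJ P A J * Dr R r k #|J|.
  rewrite /bonf_main; under eq_bigr => j _ do rewrite SjE // mulr_sumr.
  rewrite exchange_big /=; apply: eq_bigr => J _; rewrite /Dr mulr_sumr.
  by apply: eq_bigr => j _; rewrite mulrCA.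
have hC : bonf_corr P A r k = \sum_J pJ P A J * (cstB R n r k * ('C(#|J|, k.+1))%:R).
  rewrite /bonf_corr -mulr_suml -/(cstB R n r k) SjE // mulr_sumr.
  by apply: eq_bigr => J _; rewrite mulrCA.
have hJ : forall J : {set 'I_n}, (#|J| <= n)%N.
  by move=> J; rewrite -[X in (_ <= X)%N](card_ord n) max_card.
rewrite XE // hM hC; split => ho.
  rewrite -big_split /=; apply: ler_sum => J _; rewrite -mulrDr.
  by apply: ler_wpM2l; [exact: pJ_ge0 | exact: pw_odd].
rewrite -sumrB /=; apply: ler_sum => J _; rewrite -mulrBr.
by apply: ler_wpM2l; [exact: pJ_ge0 | exact: pw_even].
Qed.
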